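(* Let $M\in\mathbb{R}_+^{p\times q}$ be a slack matrix of a polyhedral cone, let $k=\operatorname{rank}(M)$, and let $M=AB$ with $A\in\mathbb{R}^{p\times k}$, $B\in\mathbb{R}^{k\times q}$, $\operatorname{rank}(A)=\operatorname{rank}(B)=k$. Let $K\subseteq\mathbb{R}^k$ be the cone generated by the rows of $A$. Then $K=\{x\in\mathbb{R}^k : x^TB\ge 0\}$, i.e., the columns of $B$ form an $\mathcal{H}$-representation of $K$. In particular, $M$ is a slack matrix of $K$.
   Context: A matrix $S\in\mathbb{R}^{p\times q}$ is a slack matrix of a polyhedral cone $K\subseteq\mathbb{R}^n$ if there are matrices $A\in\mathbb{R}^{p\times n}$ and $B\in\mathbb{R}^{n\times q}$ with $K=\{x\in\mathbb{R}^n: x^TB\ge 0\}=\{y^TA: y\in\mathbb{R}_+^p\}$ (the columns of $B$ form an $\mathcal{H}$-representation, the rows of $A$ a $\mathcal{V}$-representation of $K$) and $S=AB$. A matrix is a slack matrix of a polyhedral cone if it is a slack matrix of some polyhedral cone. *)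

(* Defs.v *)
From HB Require Import structures.
From mathcomp Require Import all_boot all_order all_algebra.
From mathcomp Require Import reals.
Set Implicit Arguments. Unset Strict Implicit. Unset Printing Implicit Defensive.
Import Order.TTheory GRing.Theory Num.Theory.
Local Open Scope ring_scope.

Definition hcone (R : realType) (n q : nat) (B : 'M[R]_(n, q)) : 'rV[R]_n -> Prop :=
  fun x => forall j : 'I_q, 0 <= (x *m B) 0 j.

Definition vcone (R : realType) (p n : nat) (A : 'M[R]_(p, n)) : 'rV[R]_n -> Prop :=
  fun x => exists y : 'rV[R]_p, (forall i : 'I_p, 0 <= y 0 i) /\ x = y *m A.

Definition slack_matrix_of (R : realType) (n p q : nat)
    (K : 'rV[R]_n -> Prop) (S : 'M[R]_(p, q)) : Prop :=
  exists (A : 'M[R]_(p, n)) (B : 'M[R]_(n, q)),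
    (forall x, K x <-> hcone B x) /\ (forall x, K x <-> vcone A x) /\ S = A *m B.

Definition is_slack_matrix (R : realType) (p q : nat) (S : 'M[R]_(p, q)) : Prop :=
  exists n : nat, exists K : 'rV[R]_n -> Prop, slack_matrix_of K S.

(* Main.v *)
Require Import Defs.
From HB Require Import structures.
From mathcomp Require Import all_boot all_order all_algebra.
From mathcomp Require Import reals.
Import Order.TTheory GRing.Theory Num.Theory.
Local Open Scope ring_scope.
Lemma BMl (R : realType) (p q k : nat) (M : 'M[R]_(p, q)) (A : 'M[R]_(p, k)) (B : 'M[R]_(k, q)) :
 k = \rank M -> M = A *m B -> \rank B = k -> (B <= M)%MS.
Proof.
move=> rk EM rB.
have MB : (M <= B)%MS by rewrite EM submxMl.
by rewrite -(mxrank_leqif_sup MB).2 rB -rk.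
Qed.
Lemma dir1 (R : realType) (p q k : nat) (M : 'M[R]_(p, q)) (A : 'M[R]_(p, k)) (B : 'M[R]_(k, q)) :
 (forall i j, 0 <= M i j) -> M = A *m B -> forall x, vcone A x -> hcone B x.
Proof.
move=> M0 EM x [y [y0 ->]] j; rewrite -mulmxA -EM mxE.
by apply: sumr_ge0 => i _; apply: mulr_ge0.
Qed.
Lemma dir2 (R : realType) (p q k n : nat) (M : 'M[R]_(p, q)) (A : 'M[R]_(p, k)) (B : 'M[R]_(k, q))
  (K : 'rV[R]_n -> Prop) (A' : 'M[R]_(p, n)) (B' : 'M[R]_(n, q)) :
  (forall x, K x <-> hcone B' x) -> (forall x, K x <-> vcone A' x) -> M = A' *m B' ->
  (B <= M)%MS -> M = A *m B -> \rank B = k -> forall x, hcone B x -> vcone A x.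
Proof.
move=> KH KV EM' BM EM rB x hx.
have : (x *m B <= M)%MS by apply: submx_trans BM; apply: submxMl.
move/submxP => [z Hz].
have hw : hcone B' (z *m A').
  by move=> j; rewrite -mulmxA -EM' -Hz; apply: hx.
have := proj1 (KV _) (proj2 (KH _) hw).
move=> [y [y0 Ey]].
exists y; split => //.
have fB : row_free B by rewrite /row_free rB.
apply: (row_free_inj fB) => /=.
by rewrite Hz EM' mulmxA Ey -mulmxA -EM' EM mulmxA.
Qed.
Theorem lemma2p5 (R : realType) (p q k : nat) (M : 'M[R]_(p, q))
    (A : 'M[R]_(p, k)) (B : 'M[R]_(k, q)) :
  (forall i j, 0 <= M i j) ->
  is_slack_matrix M ->
  k = \rank M ->
  M = A *m B ->
  \rank A = k ->
  \rank B = k ->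
  (forall x : 'rV[R]_k, vcone A x <-> hcone B x) /\
  slack_matrix_of (vcone A) M.
Proof.
move=> M0 [n [K [A' [B' [KH [KV EM']]]]]] rk EM rA rB.
have BM : (B <= M)%MS by exact: (@BMl _ _ _ _ M A B rk EM rB).
have eqv : forall x : 'rV[R]_k, vcone A x <-> hcone B x.
  move=> x; split; first exact: (@dir1 _ _ _ _ M A B M0 EM).
  exact: (@dir2 _ _ _ _ _ M A B K A' B' KH KV EM' BM EM rB).
split; first exact: eqv.
exists A, B; split; first exact: eqv.
by split; [move=> x; split | exact: EM].
Qed.
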